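(* Let $(\mathcal{C},\psi)$ be a t-pair. Then for every $b\in\{i,d,a\}$, $\operatorname{typ}(\mathcal{U}^{bi}_{\mathcal{C}\psi})\preceq\operatorname{typ}(\mathcal{U}^{bd}_{\mathcal{C}\psi})\preceq\operatorname{typ}(\mathcal{U}^{ba}_{\mathcal{C}\psi})$ and $\operatorname{typ}(\mathcal{U}^{ab}_{\mathcal{C}\psi})\preceq\operatorname{typ}(\mathcal{U}^{db}_{\mathcal{C}\psi})\preceq\operatorname{typ}(\mathcal{U}^{ib}_{\mathcal{C}\psi})$.
   Context: Let $\mathbb{N}=\{0,1,2,\dots\}$; for an integer $k\ge 2$ let $E_k=\{0,1,\dots,k-1\}$; let $\mathcal{P}(\mathbb{N})$ be the set of nonempty finite subsets of $\mathbb{N}$. Let $F$ be a nonempty set (of attribute names). A decision table $T\in\mathcal{M}_k(F)$ is a rectangular table with $n\ge 1$ columns labeled with attributes $f_1,\dots,f_n\in F$ (any two columns labeled with the same attribute are equal), whose rows are pairwise different tuples from $E_k^n$ (the set of rows may be empty), each row being labeled with a set of decisions from $\mathcal{P}(\mathbb{N})$. Write $At(T)=\{f_1,\dots,f_n\}$ and $\Delta(T)$ for the set of rows. For a word $\alpha=(f_{i_1},\delta_1)\cdots(f_{i_m},\delta_m)$ with $f_{i_j}\in At(T)$, $\delta_j\in E_k$, the subtable $T\alpha$ consists of the rows of $T$ having value $\delta_j$ in column $f_{i_j}$ for all $j$ ($T\lambda=T$ for the empty word $\lambda$). Operations on tables: (1) removal of a column from a table with at least two columns (if groups of equal rows appear,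 only the first row of each group, with its decision set, is kept); (2) changing of decisions: the decision sets attached to rows are replaced arbitrarily by sets from $\mathcal{P}(\mathbb{N})$; (3) permutation of columns: swap two columns together with their attribute labels; (4) duplication of columns: add a copy of a column (with its label) next to it. A set $\mathcal{C}\subseteq\mathcal{M}_k(F)$ is a closed class if every table obtained from a table of $\mathcal{C}$ by finitely many such operations belongs to $\mathcal{C}$. A decision tree over $\mathcal{M}_k(F)$ is a finite directed tree with a root (unique node with no entering edge) and at least two nodes such that the root and the edges leaving the root are unlabeled, each worker node (neither root nor terminal) is labeled with an attribute from $F$, each edge leaving a worker node is labeled with a number from $E_k$, and each terminal node is labeled with a number from $\mathbb{N}$. For a complete path $\xi$ (root to terminal node) whose worker nodes are labeled $f_{j_1},\dots,f_{j_m}$ in order, with the edges leaving them labeled $\delta_1,\dots,\delta_m$, put $\pi(\xi)=(f_{j_1},\delta_1)\cdots(f_{j_m},\delta_m)$, $\varphi(\xi)=f_{j_1}\cdots f_{j_m}$ (both empty if $m=0$), and let $\tau(\xi)$ be the label of its terminal node. A nondeterministic decision tree for $T$ is a decision tree $\Gamma$ whose worker-node attributes lie in $At(T)$, such that $\bigcup_{\xi}\Delta(T\pi(\xi))=\Delta(T)$ (union over complete paths), and for every row $r\in\Delta(T)$ and every complete path $\xi$ with $r\in\Delta(T\pi(\xi))$, $\tau(\xi)$ belongs to the decision set of $r$. A decision tree is deterministic if exactly one edge leaves the root and the edges leaving each worker node have pairwise different labels; a deterministic decision tree for $T$ is a deterministic decision tree that is a nondeterministic decision tree for $T$. A complexity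 measure over $\mathcal{M}_k(F)$ is any map $\psi:F^*\to\mathbb{N}$, where $F^*$ is the set of finite words over $F$ including the empty word $\lambda$. For a tree, $\psi(\Gamma)=\max_\xi\psi(\varphi(\xi))$ over complete paths. For $T$ with columns labeled $f_1,\dots,f_n$: $\psi^i(T)=\psi(f_1\cdots f_n)$, $\psi^d(T)$ is the minimum complexity of a deterministic decision tree for $T$, $\psi^a(T)$ the minimum complexity of a nondeterministic decision tree for $T$. A t-pair $(\mathcal{C},\psi)$ consists of a closed class $\mathcal{C}\subseteq\mathcal{M}_k(F)$ and a complexity measure $\psi$ over $\mathcal{M}_k(F)$. For $b,c\in\{i,d,a\}$ define the partial function $\mathcal{U}^{bc}_{\mathcal{C}\psi}(n)=\max\{\psi^b(T):T\in\mathcal{C},\psi^c(T)\le n\}$ (defined iff this set is nonempty and finite). For a partial function $g:\mathbb{N}\to\mathbb{N}$ with domain $\mathrm{Dom}(g)$, let $\mathrm{Dom}^+(g)=\{n\in\mathrm{Dom}(g):g(n)\ge n\}$, $\mathrm{Dom}^-(g)=\{n\in\mathrm{Dom}(g):g(n)\le n\}$. Its type $\operatorname{typ}(g)$ is: $\alpha$ if $\mathrm{Dom}(g)$ is infinite and $g$ is bounded above; $\beta$ if $\mathrm{Dom}(g)$ is infinite, $\mathrm{Dom}^+(g)$ is finite and $g$ is unbounded above; $\gamma$ if $\mathrm{Dom}^+(g)$ and $\mathrm{Dom}^-(g)$ are both infinite; $\delta$ if $\mathrm{Dom}(g)$ is infinite and $\mathrm{Dom}^-(g)$ is finite; $\epsilon$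 if $\mathrm{Dom}(g)$ is finite. $\preceq$ is the linear order $\alpha\preceq\beta\preceq\gamma\preceq\delta\preceq\epsilon$. *)

(* Defs.v *)
From Stdlib Require Import List Arith.
Import ListNotations.

(* A table: column labels (attributes) and an ORDERED list of rows;    *)
(* each row is a tuple (list nat) together with its decision set,      *)
(* a nonempty finite subset of nat represented by a nonempty list      *)
(* (membership = In).                                                  *)

Record table (F : Type) := mkTable {
  cols : list F;
  rows : list (list nat * list nat)
}.
Arguments mkTable {F} _ _.
Arguments cols {F} _.
Arguments rows {F} _.

Definition wf_table {F : Type} (k : nat) (T : table F) : Prop :=
  1 <= length (cols T) /\
  (forall r d, In (r, d) (rows T) ->
     length r = length (cols T) /\ (forall x, In x r -> x < k) /\ d <> []) /\
  NoDup (map fst (rows T)) /\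
  (forall i j (f : F), nth_error (cols T) i = Some f -> nth_error (cols T) j = Some f ->
     forall r d, In (r, d) (rows T) -> nth_error r i = nth_error r j).

Fixpoint remove_nth {A : Type} (i : nat) (l : list A) : list A :=
  match l, i with
  | [], _ => []
  | _ :: l', 0 => l'
  | x :: l', S i' => x :: remove_nth i' l'
  end.

Fixpoint replace_nth {A : Type} (i : nat) (y : A) (l : list A) : list A :=
  match l, i with
  | [], _ => []
  | _ :: l', 0 => y :: l'
  | x :: l', S i' => x :: replace_nth i' y l'
  end.

Definition swap_list {A : Type} (i j : nat) (l : list A) : list A :=
  match nth_error l i, nth_error l j with
  | Some a, Some b => replace_nth i b (replace_nth j a l)
  | _, _ => l
  end.

(* insert a copy of entry i right after it *)
Definition dup_list {A : Type} (i : nat) (l : list A) : list A :=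
  firstn (S i) l ++ skipn i l.

Fixpoint dedup_first (seen : list (list nat)) (rs : list (list nat * list nat))
  : list (list nat * list nat) :=
  match rs with
  | [] => []
  | (r, d) :: rs' =>
      if in_dec (list_eq_dec Nat.eq_dec) r seen then dedup_first seen rs'
      else (r, d) :: dedup_first (r :: seen) rs'
  end.

Inductive table_op {F : Type} : table F -> table F -> Prop :=
  | op_remove : forall T i,
      2 <= length (cols T) -> i < length (cols T) ->
      table_op T (mkTable (remove_nth i (cols T))
                    (dedup_first [] (map (fun rd => (remove_nth i (fst rd), snd rd)) (rows T))))
  | op_change : forall T rs',
      map fst rs' = map fst (rows T) ->
      (forall r d, In (r, d) rs' -> d <> []) ->
      table_op T (mkTable (cols T) rs')
  | op_swap : forall T i j,
      i < length (cols T) -> j < length (cols T) ->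
      table_op T (mkTable (swap_list i j (cols T))
                    (map (fun rd => (swap_list i j (fst rd), snd rd)) (rows T)))
  | op_dup : forall T i,
      i < length (cols T) ->
      table_op T (mkTable (dup_list i (cols T))
                    (map (fun rd => (dup_list i (fst rd), snd rd)) (rows T))).

Inductive obtained {F : Type} : table F -> table F -> Prop :=
  | obt_refl : forall T, obtained T T
  | obt_step : forall T T' T'', table_op T T' -> obtained T' T'' -> obtained T T''.

Definition closed_class {F : Type} (k : nat) (C : table F -> Prop) : Prop :=
  (forall T, C T -> wf_table k T) /\
  (forall T T', C T -> obtained T T' -> C T').

(* subtable: row tuple r lies in T alpha *)
Definition row_matches {F : Type} (cs : list F) (r : list nat) (alpha : list (F * nat)) : Prop :=
  forall f delta, In (f, delta) alpha ->
    forall j, nth_error cs j = Some f -> nth_error r j = Some delta.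

(* A node is a terminal (labeled by nat) or a worker node labeled by   *)
(* an attribute with a list of (edge label, child) pairs.  A decision  *)
(* tree is the (nonempty) list of children of the unlabeled root.      *)

Inductive dnode (F : Type) : Type :=
  | Term : nat -> dnode F
  | Work : F -> list (nat * dnode F) -> dnode F.
Arguments Term {F} _.
Arguments Work {F} _ _.

Definition dtree (F : Type) := list (dnode F).

Fixpoint node_wf {F : Type} (k : nat) (t : dnode F) : Prop :=
  match t with
  | Term _ => True
  | Work _ ch =>
      ch <> [] /\
      (fix go (l : list (nat * dnode F)) : Prop :=
         match l with
         | [] => True
         | (delta, c) :: l' => delta < k /\ node_wf k c /\ go l'
         end) ch
  end.

Fixpoint node_det {F : Type} (t : dnode F) : Prop :=
  match t with
  | Term _ => True
  | Work _ ch =>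
      NoDup (map fst ch) /\
      (fix go (l : list (nat * dnode F)) : Prop :=
         match l with
         | [] => True
         | (_, c) :: l' => node_det c /\ go l'
         end) ch
  end.

Fixpoint node_attrs_in {F : Type} (P : F -> Prop) (t : dnode F) : Prop :=
  match t with
  | Term _ => True
  | Work f ch =>
      P f /\
      (fix go (l : list (nat * dnode F)) : Prop :=
         match l with
         | [] => True
         | (_, c) :: l' => node_attrs_in P c /\ go l'
         end) ch
  end.

Fixpoint node_paths {F : Type} (t : dnode F) : list (list (F * nat) * nat) :=
  match t with
  | Term d => [([], d)]
  | Work f ch =>
      (fix go (l : list (nat * dnode F)) : list (list (F * nat) * nat) :=
         match l with
         | [] => []
         | (delta, c) :: l' =>
             map (fun p => ((f, delta) :: fst p, snd p)) (node_paths c) ++ go l'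
         end) ch
  end.

Definition tree_paths {F : Type} (G : dtree F) : list (list (F * nat) * nat) :=
  flat_map node_paths G.

Definition is_dtree {F : Type} (k : nat) (G : dtree F) : Prop :=
  G <> [] /\ Forall (node_wf k) G.

Definition is_det {F : Type} (G : dtree F) : Prop :=
  length G = 1 /\ Forall node_det G.

Definition nondet_tree_for {F : Type} (k : nat) (T : table F) (G : dtree F) : Prop :=
  is_dtree k G /\
  Forall (node_attrs_in (fun f => In f (cols T))) G /\
  (forall r d, In (r, d) (rows T) ->
     exists p, In p (tree_paths G) /\ row_matches (cols T) r (fst p)) /\
  (forall r d, In (r, d) (rows T) -> forall p, In p (tree_paths G) ->
     row_matches (cols T) r (fst p) -> In (snd p) d).

Definition det_tree_for {F : Type} (k : nat) (T : table F) (G : dtree F) : Prop :=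
  is_det G /\ nondet_tree_for k T G.

Definition tree_cx {F : Type} (psi : list F -> nat) (G : dtree F) : nat :=
  fold_right Nat.max 0 (map (fun p => psi (map fst (fst p))) (tree_paths G)).

Definition is_min (P : nat -> Prop) (m : nat) : Prop := P m /\ forall v, P v -> m <= v.
Definition is_max (P : nat -> Prop) (m : nat) : Prop := P m /\ forall v, P v -> v <= m.

Inductive mode := Mi | Md | Ma.

Definition psi_val {F : Type} (k : nat) (psi : list F -> nat) (b : mode) (T : table F) (m : nat)
  : Prop :=
  match b with
  | Mi => m = psi (cols T)
  | Md => is_min (fun v => exists G, det_tree_for k T G /\ tree_cx psi G = v) m
  | Ma => is_min (fun v => exists G, nondet_tree_for k T G /\ tree_cx psi G = v) m
  end.

(* graph of the partial function U^{bc}_{C psi}: U n v <-> U(n) is defined and = v *)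
Definition Ufun {F : Type} (k : nat) (C : table F -> Prop) (psi : list F -> nat) (b c : mode)
  : nat -> nat -> Prop :=
  fun n v => is_max (fun m => exists T, C T /\ psi_val k psi b T m /\
                                  exists m', psi_val k psi c T m' /\ m' <= n) v.

Definition finite_nat (P : nat -> Prop) : Prop := exists N, forall n, P n -> n < N.
Definition infinite_nat (P : nat -> Prop) : Prop := ~ finite_nat P.

Definition Dom (g : nat -> nat -> Prop) : nat -> Prop := fun n => exists v, g n v.
Definition DomP (g : nat -> nat -> Prop) : nat -> Prop := fun n => exists v, g n v /\ n <= v.
Definition DomM (g : nat -> nat -> Prop) : nat -> Prop := fun n => exists v, g n v /\ v <= n.
Definition bounded_above (g : nat -> nat -> Prop) : Prop :=
  exists B, forall n v, g n v -> v <= B.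

Inductive ftype := Talpha | Tbeta | Tgamma | Tdelta | Teps.

Definition has_type (g : nat -> nat -> Prop) (t : ftype) : Prop :=
  match t with
  | Talpha => infinite_nat (Dom g) /\ bounded_above g
  | Tbeta => infinite_nat (Dom g) /\ finite_nat (DomP g) /\ ~ bounded_above g
  | Tgamma => infinite_nat (DomP g) /\ infinite_nat (DomM g)
  | Tdelta => infinite_nat (Dom g) /\ finite_nat (DomM g)
  | Teps => finite_nat (Dom g)
  end.

Definition ftype_rank (t : ftype) : nat :=
  match t with Talpha => 0 | Tbeta => 1 | Tgamma => 2 | Tdelta => 3 | Teps => 4 end.

Definition ftype_le (t1 t2 : ftype) : Prop := ftype_rank t1 <= ftype_rank t2.

Definition typ_le (g1 g2 : nat -> nat -> Prop) : Prop :=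
  forall t1 t2, has_type g1 t1 -> has_type g2 t2 -> ftype_le t1 t2.

(* Main.v *)
Require Import Defs.
From Stdlib Require Import List Arith Lia Classical.
Import ListNotations.

Section Tr.
Context {F : Type}.

Lemma node_paths_Work (f : F) ch :
  node_paths (Work f ch) =
  flat_map (fun dc => map (fun p => ((f, fst dc) :: fst p, snd p)) (node_paths (snd dc))) ch.
Proof.
  induction ch as [|[d c] ch IH]; [reflexivity|].
  simpl in *. rewrite IH. reflexivity.
Qed.

Lemma node_wf_Work k (f : F) ch :
  ch <> [] -> Forall (fun dc => fst dc < k /\ node_wf k (snd dc)) ch -> node_wf k (Work f ch).
Proof.
  induction ch as [|[d c] ch IH]; intros Hne Hf; [congruence|].
  inversion Hf; subst. simpl in *. split; [discriminate|].
  destruct H1. split; [auto|split; [auto|]].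
  destruct ch as [|x ch']; [exact I|].
  exact (proj2 (IH ltac:(discriminate) H2)).
Qed.

Lemma node_det_Work (f : F) ch :
  NoDup (map fst ch) -> Forall (fun dc => node_det (snd dc)) ch -> node_det (Work f ch).
Proof.
  intros Hn Hf. split; [exact Hn|]. clear Hn.
  induction ch as [|[d c] ch IH]; [exact I|].
  inversion Hf; subst. split; [assumption|apply IH; assumption].
Qed.

Lemma node_attrs_Work (P : F -> Prop) f ch :
  P f -> Forall (fun dc => node_attrs_in P (snd dc)) ch -> node_attrs_in P (Work f ch).
Proof.
  intros Hp Hf. split; [exact Hp|]. clear Hp.
  induction ch as [|[d c] ch IH]; [exact I|].
  inversion Hf; subst. split; [assumption|apply IH; assumption].
Qed.

Definition lab (T : table F) (ds : list nat) : nat :=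
  match find (fun rd => if list_eq_dec Nat.eq_dec (fst rd) ds then true else false) (rows T) with
  | Some rd => hd 0 (snd rd) | None => 0 end.

Fixpoint full (k : nat) (T : table F) (cs : list F) (pre : list nat) : dnode F :=
  match cs with
  | [] => Term (lab T pre)
  | f :: cs' => Work f (map (fun d => (d, full k T cs' (pre ++ [d]))) (seq 0 k))
  end.

Lemma full_paths k T cs : forall pre p,
  In p (node_paths (full k T cs pre)) <->
  exists ds, length ds = length cs /\ Forall (fun x => x < k) ds /\
             p = (combine cs ds, lab T (pre ++ ds)).
Proof.
  induction cs as [|f cs IH]; intros pre p; cbn [full length].
  - split.
    + intros [H|[]]. exists []. simpl. rewrite app_nil_r. auto.
    + intros [ds [Hl [_ Hp]]]. destruct ds; [|discriminate]. left. rewrite app_nil_r in Hp. auto.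
  - rewrite node_paths_Work, in_flat_map. split.
    + intros [x [Hx Hp]]. apply in_map_iff in Hx. destruct Hx as [d [<- Hd]].
      apply in_seq in Hd. simpl in Hp. apply in_map_iff in Hp. destruct Hp as [q [<- Hq]].
      apply IH in Hq. destruct Hq as [ds [Hl [Hf ->]]].
      exists (d :: ds). simpl. rewrite <- app_assoc. simpl. repeat split; auto.
      constructor; auto. lia.
    + intros [ds [Hl [Hf ->]]]. destruct ds as [|d ds]; [discriminate|].
      inversion Hf; subst. simpl in Hl.
      exists (d, full k T cs (pre ++ [d])). split.
      * apply in_map_iff. exists d. split; auto. apply in_seq. lia.
      * simpl. apply in_map_iff. exists (combine cs ds, lab T (pre ++ d :: ds)).
        split; [reflexivity|]. apply IH. exists ds. rewrite <- app_assoc. simpl. auto.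
Qed.

Lemma in_combine_nth {A B} (l1 : list A) (l2 : list B) a b :
  In (a, b) (combine l1 l2) -> exists i, nth_error l1 i = Some a /\ nth_error l2 i = Some b.
Proof.
  revert l2; induction l1 as [|x l1 IH]; intros [|y l2]; simpl; try tauto.
  intros [H|H].
  - inversion H; subst. exists 0. auto.
  - destruct (IH _ H) as [i Hi]. exists (S i). auto.
Qed.

Lemma nth_in_combine {A B} (l1 : list A) (l2 : list B) a b i :
  nth_error l1 i = Some a -> nth_error l2 i = Some b -> In (a, b) (combine l1 l2).
Proof.
  revert l2 i; induction l1 as [|x l1 IH]; intros [|y l2] [|i]; simpl; try discriminate.
  - intros H1 H2. inversion H1; inversion H2; subst. auto.
  - intros. right. eauto.
Qed.

Lemma map_fst_combine {A B} (l1 : list A) (l2 : list B) :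
  length l1 = length l2 -> map fst (combine l1 l2) = l1.
Proof.
  revert l2; induction l1 as [|x l1 IH]; intros [|y l2]; simpl; try discriminate; auto.
  intros H. f_equal. auto.
Qed.

Lemma nodup_fst {A B} (l : list (A * B)) a b b' :
  NoDup (map fst l) -> In (a, b) l -> In (a, b') l -> b = b'.
Proof.
  induction l as [|x l IH]; simpl; [tauto|].
  intros Hn. inversion Hn as [|y l' Hni Hnd]; subst. intros [H1|H1] [H2|H2]; subst.
  - inversion H2; auto.
  - exfalso. apply Hni. apply in_map_iff. exists (a, b'). auto.
  - exfalso. apply Hni. apply in_map_iff. exists (a, b). auto.
  - auto.
Qed.

Lemma lab_ok k (T : table F) r d : wf_table k T -> In (r, d) (rows T) -> In (lab T r) d.
Proof.
  intros [_ [Hr [Hn _]]] Hin. unfold lab.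
  destruct (find _ _) as [[r' d']|] eqn:E.
  - apply find_some in E. destruct E as [Hin' He]. simpl in He.
    destruct (list_eq_dec Nat.eq_dec r' r); [|discriminate]. subst.
    simpl. rewrite (nodup_fst _ _ _ _ Hn Hin' Hin).
    destruct (Hr _ _ Hin) as [_ [_ Hd]]. destruct d; [congruence|]. simpl; auto.
  - exfalso. pose proof (find_none _ _ E _ Hin). simpl in H.
    destruct (list_eq_dec Nat.eq_dec r r); congruence.
Qed.

Lemma fold_max_le l B : Forall (fun x => x <= B) l -> fold_right Nat.max 0 l <= B.
Proof. induction 1; simpl; lia. Qed.

Lemma full_wf k T cs pre : 1 <= k -> node_wf k (full k T cs pre).
Proof.
  intros Hk. revert pre; induction cs as [|f cs IH]; intros pre; cbn [full]; [exact I|].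
  apply node_wf_Work.
  - destruct k; [lia|]. simpl. discriminate.
  - apply Forall_forall. intros x Hx. apply in_map_iff in Hx. destruct Hx as [d [<- Hd]].
    apply in_seq in Hd. simpl. split; [lia|auto].
Qed.

Lemma full_det' k T cs pre : node_det (full k T cs pre).
Proof.
  revert pre; induction cs as [|f cs IH]; intros pre; cbn [full]; [exact I|].
  apply node_det_Work.
  - rewrite map_map. simpl. rewrite map_id. apply seq_NoDup.
  - apply Forall_forall. intros x Hx. apply in_map_iff in Hx. destruct Hx as [d [<- Hd]]. simpl. apply IH.
Qed.

Lemma full_attrs k T cs0 cs pre : incl cs cs0 ->
  node_attrs_in (fun f => In f cs0) (full k T cs pre).
Proof.
  revert pre; induction cs as [|f cs IH]; intros pre Hi; cbn [full]; [exact I|].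
  apply node_attrs_Work.
  - apply Hi. left; auto.
  - apply Forall_forall. intros x Hx. apply in_map_iff in Hx. destruct Hx as [d [<- Hd]].
    simpl. apply IH. intros y Hy. apply Hi. right; auto.
Qed.

Lemma full_tree k (psi : list F -> nat) T : 1 <= k -> wf_table k T ->
  det_tree_for k T [full k T (cols T) []] /\ tree_cx psi [full k T (cols T) []] <= psi (cols T).
Proof.
  intros Hk Hwf. pose proof Hwf as [Hc [Hr [Hn Heq]]].
  assert (Hp : forall p, In p (tree_paths [full k T (cols T) []]) <->
     exists ds, length ds = length (cols T) /\ Forall (fun x => x < k) ds /\
             p = (combine (cols T) ds, lab T ds)).
  { intros p. unfold tree_paths. simpl. rewrite app_nil_r. apply full_paths. }
  split; [split; [split; [reflexivity|constructor; [apply full_det'|constructor]]|]|].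
  - split; [split; [discriminate|constructor; [apply full_wf; auto|constructor]]|].
    split; [constructor; [apply full_attrs; intros x; auto|constructor]|].
    split.
    + intros r d Hin. exists (combine (cols T) r, lab T r). split.
      * apply Hp. exists r. destruct (Hr _ _ Hin) as [Hl [Hlt _]].
        repeat split; auto. apply Forall_forall; auto.
      * intros f delta Hfd j Hj. simpl in Hfd. apply in_combine_nth in Hfd.
        destruct Hfd as [i [Hi1 Hi2]]. rewrite <- Hi2. symmetry. eapply Heq; eauto.
    + intros r d Hin p Hpin Hm. apply Hp in Hpin. destruct Hpin as [ds [Hl [_ ->]]].
      simpl in *. destruct (Hr _ _ Hin) as [Hlr _].
      assert (r = ds).
      { apply nth_error_ext. intros i.
        destruct (nth_error ds i) as [x|] eqn:E.
        - assert (i < length (cols T)).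
          { rewrite <- Hl. apply nth_error_Some. congruence. }
          destruct (nth_error (cols T) i) as [f|] eqn:E2.
          + apply (Hm f x); auto. eapply nth_in_combine; eauto.
          + apply nth_error_None in E2. lia.
        - apply nth_error_None in E. apply nth_error_None. lia. }
      subst. eapply lab_ok; eauto.
  - unfold tree_cx. apply fold_max_le. apply Forall_forall. intros x Hx.
    apply in_map_iff in Hx. destruct Hx as [p [<- Hpin]]. apply Hp in Hpin.
    destruct Hpin as [ds [Hl [_ ->]]]. simpl. rewrite map_fst_combine; auto.
Qed.
End Tr.

Lemma min_exists (P : nat -> Prop) x : P x -> exists m, is_min P m.
Proof.
  induction x as [x IH] using lt_wf_ind. intros Hx.
  destruct (classic (exists y, y < x /\ P y)) as [[y [Hy Py]]|Hn].
  - exact (IH y Hy Py).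
  - exists x. split; auto. intros v Hv. destruct (le_lt_dec x v); auto.
    exfalso; eauto.
Qed.

Lemma max_exists (P : nat -> Prop) B : (exists x, P x) -> (forall x, P x -> x <= B) ->
  exists m, is_max P m.
Proof.
  induction B as [|B IH]; intros He Hb.
  - destruct He as [x Hx]. assert (x = 0) by (specialize (Hb x Hx); lia). subst.
    exists 0. split; auto.
  - destruct (classic (P (S B))) as [H|H].
    + exists (S B). split; auto.
    + apply IH; auto. intros x Hx. specialize (Hb x Hx).
      destruct (Nat.eq_dec x (S B)); [subst; contradiction|lia].
Qed.

Lemma inf_ex P : infinite_nat P -> forall N, exists n, N <= n /\ P n.
Proof.
  intros H N. apply NNPP. intros Hn. apply H. exists N. intros n Pn.
  destruct (le_lt_dec N n); auto. exfalso; eauto.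
Qed.

Lemma tail_inf (P : nat -> Prop) N : (forall n, N <= n -> P n) -> infinite_nat P.
Proof.
  intros H [M HM]. specialize (HM (max N M) (H _ (Nat.le_max_l _ _))). lia.
Qed.

Lemma typ_gen (g1 g2 : nat -> nat -> Prop)
  (Hmono : forall n m v w, g1 n v -> g1 m w -> n <= m -> v <= w)
  (Htail : infinite_nat (Dom g2) -> exists N, forall n, N <= n ->
      (exists v, g1 n v) /\ (exists w, g2 n w) /\ forall v w, g1 n v -> g2 n w -> v <= w) :
  typ_le g1 g2.
Proof.
  intros t1 t2 H1 H2. unfold ftype_le.
  destruct t2; simpl in H2.
  - destruct H2 as [Hi [B HB]]. destruct (Htail Hi) as [N HN].
    destruct t1; simpl in H1; simpl; try lia; exfalso.
    + destruct H1 as [_ [_ Hnb]]. apply Hnb. exists B. intros n v Hv.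
      destruct (HN (max n N) (Nat.le_max_r _ _)) as [[v' Hv'] [[w Hw] Hle]].
      specialize (Hmono _ _ _ _ Hv Hv' (Nat.le_max_l _ _)). specialize (Hle _ _ Hv' Hw).
      specialize (HB _ _ Hw). lia.
    + destruct H1 as [HP _]. destruct (inf_ex _ HP (max N (S B))) as [n [Hn [v [Hv Hnv]]]].
      destruct (HN n ltac:(lia)) as [_ [[w Hw] Hle]]. specialize (Hle _ _ Hv Hw).
      specialize (HB _ _ Hw). lia.
    + destruct H1 as [_ [M HM]]. set (n := max N (max M (S B))).
      destruct (HN n ltac:(lia)) as [[v Hv] [[w Hw] Hle]]. specialize (Hle _ _ Hv Hw).
      specialize (HB _ _ Hw). assert (n < M) by (apply HM; exists v; split; auto; lia). lia.
    + destruct H1 as [M HM]. destruct (HN (max N M) ltac:(lia)) as [[v Hv] _].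
      assert (max N M < M) by (apply HM; exists v; auto). lia.
  - destruct H2 as [Hi [[P HP] _]]. destruct (Htail Hi) as [N HN].
    destruct t1; simpl in H1; simpl; try lia; exfalso.
    + destruct H1 as [HDP _]. destruct (inf_ex _ HDP (max N P)) as [n [Hn [v [Hv Hnv]]]].
      destruct (HN n ltac:(lia)) as [_ [[w Hw] Hle]]. specialize (Hle _ _ Hv Hw).
      assert (n < P) by (apply HP; exists w; split; auto; lia). lia.
    + destruct H1 as [_ [M HM]]. set (n := max N (max M P)).
      destruct (HN n ltac:(lia)) as [[v Hv] [[w Hw] Hle]]. specialize (Hle _ _ Hv Hw).
      destruct (le_lt_dec v n).
      * assert (n < M) by (apply HM; exists v; split; auto). lia.
      * assert (n < P) by (apply HP; exists w; split; auto; lia). lia.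
    + destruct H1 as [M HM]. destruct (HN (max N M) ltac:(lia)) as [[v Hv] _].
      assert (max N M < M) by (apply HM; exists v; auto). lia.
  - destruct H2 as [_ HDM].
    assert (Hi : infinite_nat (Dom g2)).
    { intros [M HM]. apply HDM. exists M. intros n [v [Hv _]]. apply HM. exists v; auto. }
    destruct (Htail Hi) as [N HN].
    destruct t1; simpl in H1; simpl; try lia; exfalso.
    + destruct H1 as [_ [M HM]]. destruct (inf_ex _ HDM (max N M)) as [n [Hn [w [Hw Hwn]]]].
      destruct (HN n ltac:(lia)) as [[v Hv] [_ Hle]]. specialize (Hle _ _ Hv Hw).
      assert (n < M) by (apply HM; exists v; split; auto; lia). lia.
    + destruct H1 as [M HM]. destruct (HN (max N M) ltac:(lia)) as [[v Hv] _].
      assert (max N M < M) by (apply HM; exists v; auto). lia.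
  - destruct H2 as [Hi _]. destruct (Htail Hi) as [N HN].
    destruct t1; simpl in H1; simpl; try lia; exfalso.
    destruct H1 as [M HM]. destruct (HN (max N M) ltac:(lia)) as [[v Hv] _].
    assert (max N M < M) by (apply HM; exists v; auto). lia.
  - destruct t1; simpl; lia.
Qed.

Section U.
Context {X : Type} (C : X -> Prop).

Definition U (P Q : X -> nat -> Prop) (n v : nat) : Prop :=
  is_max (fun m => exists T, C T /\ P T m /\ exists m', Q T m' /\ m' <= n) v.

Lemma U_mono P Q n m v w : U P Q n v -> U P Q m w -> n <= m -> v <= w.
Proof.
  intros [[T [HT [HP [m' [HQ Hm']]]]] _] [_ Hw] Hnm. apply Hw. exists T. repeat split; auto.
  exists m'; split; auto; lia.
Qed.

Definition total (R : X -> nat -> Prop) := forall T, C T -> exists m, R T m.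

Lemma U_bounded P Q : infinite_nat (Dom (U P Q)) -> forall n, exists B,
  forall T m m', C T -> P T m -> Q T m' -> m' <= n -> m <= B.
Proof.
  intros Hi n. destruct (inf_ex _ Hi n) as [m [Hm [w [_ Hw]]]].
  exists w. intros T x y HT HP HQ Hy. apply Hw. exists T. repeat split; auto.
  exists y; split; auto; lia.
Qed.

Lemma U_nonempty P Q : infinite_nat (Dom (U P Q)) -> exists T, C T.
Proof.
  intros Hi. destruct (inf_ex _ Hi 0) as [m [_ [w [[T [HT _]] _]]]]. eauto.
Qed.

Lemma typ_first P Q1 Q2 (HP : total P) (HQ1 : total Q1) (HQ2 : total Q2)
  (Hle : forall T y z, C T -> Q2 T y -> Q1 T z -> y <= z) :
  typ_le (U P Q1) (U P Q2).
Proof.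
  apply typ_gen; [apply U_mono|].
  intros Hi. destruct (U_nonempty _ _ Hi) as [T0 HT0].
  destruct (HP _ HT0) as [p0 Hp0]. destruct (HQ1 _ HT0) as [z0 Hz0].
  exists z0. intros n Hn. destruct (U_bounded _ _ Hi n) as [B HB].
  assert (Hsub : forall m, (exists T, C T /\ P T m /\ exists m', Q1 T m' /\ m' <= n) ->
                           (exists T, C T /\ P T m /\ exists m', Q2 T m' /\ m' <= n)).
  { intros m [T [HT [HPm [m' [HQ Hm']]]]]. destruct (HQ2 _ HT) as [y Hy].
    exists T. repeat split; auto. exists y. split; auto. specialize (Hle _ _ _ HT Hy HQ). lia. }
  assert (Hne : exists m, exists T, C T /\ P T m /\ exists m', Q1 T m' /\ m' <= n).
  { exists p0, T0. repeat split; auto. exists z0; auto. }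
  split; [|split].
  - apply (max_exists _ B); auto. intros x Hx. destruct (Hsub _ Hx) as [T [HT [HPx [m' [HQ Hm']]]]].
    eapply HB; eauto.
  - apply (max_exists _ B).
    + destruct Hne as [m Hm]. eauto.
    + intros x [T [HT [HPx [m' [HQ Hm']]]]]. eapply HB; eauto.
  - intros v w [Hv _] [_ Hw]. apply Hw. apply Hsub. auto.
Qed.

Lemma typ_second P1 P2 Q (HP1 : total P1) (HP2 : total P2) (HQ : total Q)
  (Hle : forall T x y, C T -> P1 T x -> P2 T y -> x <= y) :
  typ_le (U P1 Q) (U P2 Q).
Proof.
  apply typ_gen; [apply U_mono|].
  intros Hi. destruct (U_nonempty _ _ Hi) as [T0 HT0].
  destruct (HP1 _ HT0) as [p0 Hp0]. destruct (HP2 _ HT0) as [p1 Hp1].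
  destruct (HQ _ HT0) as [z0 Hz0].
  exists z0. intros n Hn. destruct (U_bounded _ _ Hi n) as [B HB].
  assert (Hw : exists w, U P2 Q n w).
  { apply (max_exists _ B).
    + exists p1, T0. repeat split; auto. exists z0; auto.
    + intros x [T [HT [HPx [m' [HQm Hm']]]]]. eapply HB; eauto. }
  destruct Hw as [w Hw].
  assert (Hb1 : forall x, (exists T, C T /\ P1 T x /\ exists m', Q T m' /\ m' <= n) -> x <= w).
  { intros x [T [HT [HPx [m' [HQm Hm']]]]]. destruct (HP2 _ HT) as [y Hy].
    specialize (Hle _ _ _ HT HPx Hy). destruct Hw as [_ Hw].
    assert (y <= w). { apply Hw. exists T. repeat split; auto. exists m'; auto. } lia. }
  split; [|split].
  - apply (max_exists _ w); auto. exists p0, T0. repeat split; auto. exists z0; auto.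
  - eauto.
  - intros v w' [Hv _] Hw'. destruct Hw' as [Hw'1 Hw'2]. destruct Hw as [Hw1 Hw2].
    assert (w = w') by (apply Nat.le_antisymm; auto). subst. auto.
Qed.
End U.

Section Main.
Context {F : Type} (k : nat) (Hk : 2 <= k) (psi : list F -> nat).

Lemma det_ex T : wf_table k T -> exists G, det_tree_for k T G /\ tree_cx psi G <= psi (cols T).
Proof. intros H. eexists. apply (full_tree k psi T); auto. lia. Qed.

Lemma total_all (C : table F -> Prop) (HC : closed_class k C) b :
  total C (psi_val k psi b).
Proof.
  intros T HT. destruct (det_ex T (proj1 HC T HT)) as [G [HG _]].
  destruct b; simpl.
  - eauto.
  - eapply min_exists. exists G. split; eauto.
  - eapply min_exists. exists G. split; [exact (proj2 HG)|eauto].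
Qed.

Lemma le_di (C : table F -> Prop) (HC : closed_class k C) T y z : C T ->
  psi_val k psi Md T y -> psi_val k psi Mi T z -> y <= z.
Proof.
  intros HT [_ Hy] Hz. simpl in Hz. subst.
  destruct (det_ex T (proj1 HC T HT)) as [G [HG Hc]].
  specialize (Hy _ (ex_intro _ G (conj HG eq_refl))). lia.
Qed.

Lemma le_ad T x y : psi_val k psi Ma T x -> psi_val k psi Md T y -> x <= y.
Proof.
  intros [_ Hx] [[G [HG <-]] _]. apply Hx. exists G. split; auto. exact (proj2 HG).
Qed.
End Main.

Theorem lemma3 (F : Type) (HF : inhabited F) (k : nat) (Hk : 2 <= k)
  (C : table F -> Prop) (psi : list F -> nat) (HC : closed_class k C) :
  forall b : mode,
    (typ_le (Ufun k C psi b Mi) (Ufun k C psi b Md) /\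
     typ_le (Ufun k C psi b Md) (Ufun k C psi b Ma)) /\
    (typ_le (Ufun k C psi Ma b) (Ufun k C psi Md b) /\
     typ_le (Ufun k C psi Md b) (Ufun k C psi Mi b)).
Proof.
  intros b. pose proof (total_all k Hk psi C HC) as Ht.
  split; split.
  - apply (typ_first C); auto. intros. eapply le_di; eauto.
  - apply (typ_first C); auto. intros. eapply le_ad; eauto.
  - apply (typ_second C); auto. intros. eapply le_ad; eauto.
  - apply (typ_second C); auto. intros. eapply le_di; eauto.
Qed.
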